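(* Let $\mathcal B$ be a bilinear form on $\mathbb C[z]$, let $s^*,s^\dagger\in\mathbb C$, and define bilinear forms $\mathcal B^*,\mathcal B^\dagger$ on $\mathbb C[z]$ by $\mathcal B^*[z^i,z^j]:=\mathcal B[(z-s^* )z^i,z^j]$ and $\mathcal B^\dagger[z^i,z^j]:=\mathcal B[z^i,(z-s^\dagger)z^j]$ for all $i,j\ge0$. Let $\tau_0:=1$, $\tau_n:=\det(\mathcal B[z^i,z^j])_{i,j=0}^{n-1}$ ($n\ge1$), assumed nonzero. Suppose that $\{\phi_n\},\{\psi_n\}$; $\{\phi^*_n\},\{\psi^*_n\}$; and $\{\phi^\dagger_n\},\{\psi^\dagger_n\}$ (indexed by $n\ge0$) are the pairs of monic biorthogonal polynomial sequences with respect to $\mathcal B$, $\mathcal B^*$ and $\mathcal B^\dagger$ respectively, and that $\phi_n(s^* )\neq0$ and $\psi_n(s^\dagger)\neq0$ for all $n\ge0$. Then for all $n\ge0$: \begin{align*} (z-s^* )\phi^*_n(z)&=\phi_{n+1}(z)+q^*_n\phi_n(z), & q^*_n&=-\frac{\phi_{n+1}(s^* )}{\phi_n(s^* )},\\ \phi_{n+1}(z)&=\phi^\dagger_{n+1}(z)+e^\dagger_n\phi^\dagger_n(z), & e^\dagger_n&=\frac{\tau_n\tau_{n+2}}{q^\dagger_n\tau_{n+1}^2},\\ (z-s^\dagger)\psi^\dagger_n(z)&=\psi_{n+1}(z)+q^\dagger_n\psi_n(z), & q^\dagger_n&=-\frac{\psi_{n+1}(s^\dagger)}{\psi_n(s^\dagger)},\\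 \psi_{n+1}(z)&=\psi^*_{n+1}(z)+e^*_n\psi^*_n(z), & e^*_n&=\frac{\tau_n\tau_{n+2}}{q^*_n\tau_{n+1}^2}. \end{align*}
   Context: For a bilinear form $\mathcal C$ on $\mathbb C[z]$, a pair of monic biorthogonal polynomial sequences $\{\phi_n\}_{n\ge0},\{\psi_n\}_{n\ge0}$ with respect to $\mathcal C$ means: $\deg\phi_n=\deg\psi_n=n$, $\phi_n$ and $\psi_n$ are monic, and $\mathcal C[\phi_m,\psi_n]=h_n\delta_{m,n}$ with $h_n\neq0$ for all $m,n\ge0$ ($\delta$ the Kronecker delta). *)

(* Defs.v *)
From mathcomp Require Import all_boot all_algebra.
From mathcomp Require Import complex.
From mathcomp Require Import Rstruct.
Set Implicit Arguments.
Unset Strict Implicit.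
Unset Printing Implicit Defensive.
Import GRing.Theory.
Local Open Scope ring_scope.

Definition C : fieldType := (Rdefinitions.R)[i].

Definition bilinear_form (B : {poly C} -> {poly C} -> C) : Prop :=
  (forall (a : C) (p q r : {poly C}), B (a *: p + q) r = a * B p r + B q r) /\
  (forall (a : C) (p q r : {poly C}), B r (a *: p + q) = a * B r p + B r q).

Definition monic_biorthogonal (B : {poly C} -> {poly C} -> C)
    (phi psi : nat -> {poly C}) : Prop :=
  (forall n : nat, size (phi n) = n.+1 /\ size (psi n) = n.+1 /\
                   phi n \is monic /\ psi n \is monic) /\
  exists h : nat -> C, (forall n : nat, h n != 0) /\
    (forall m n : nat, B (phi m) (psi n) = h n * (m == n)%:R).

(* tau_n = det (B[z^i, z^j])_{i,j=0}^{n-1}; tau_0 = 1 (empty determinant). *)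
Definition tau (B : {poly C} -> {poly C} -> C) (n : nat) : C :=
  \det (\matrix_(i < n, j < n) B 'X^i 'X^j).

(* Main.v *)
Require Import Defs.
From mathcomp Require Import all_boot all_algebra.
From mathcomp Require Import complex.
From mathcomp Require Import Rstruct.
From mathcomp Require Import ring.
Import GRing.Theory.
Local Open Scope ring_scope.
Set Implicit Arguments.

Section Aux.
Variable B : {poly C} -> {poly C} -> C.
Hypothesis hB : bilinear_form B.

Lemma Bl0 r : B 0 r = 0.
Proof.
have := (hB.1 1 0 0 r); rewrite scaler0 addr0 mul1r => H.
by apply: (@addrI _ (B 0 r)); rewrite addr0 -H.
Qed.
Lemma Br0 r : B r 0 = 0.
Proof.
have := (hB.2 1 0 0 r); rewrite scaler0 addr0 mul1r => H.
by apply: (@addrI _ (B r 0)); rewrite addr0 -H.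
Qed.
Lemma BlZ a p r : B (a *: p) r = a * B p r.
Proof. by have := hB.1 a p 0 r; rewrite addr0 Bl0 addr0. Qed.
Lemma BrZ a p r : B r (a *: p) = a * B r p.
Proof. by have := hB.2 a p 0 r; rewrite addr0 Br0 addr0. Qed.
Lemma BlD p q r : B (p + q) r = B p r + B q r.
Proof. by have := hB.1 1 p q r; rewrite scale1r mul1r. Qed.
Lemma BrD p q r : B r (p + q) = B r p + B r q.
Proof. by have := hB.2 1 p q r; rewrite scale1r mul1r. Qed.
Lemma BlB p q r : B (p - q) r = B p r - B q r.
Proof. by rewrite -scaleN1r BlD BlZ mulN1r. Qed.
Lemma BrB p q r : B r (p - q) = B r p - B r q.
Proof. by rewrite -scaleN1r BrD BrZ mulN1r. Qed.
Lemma Bsuml m (F : 'I_m -> {poly C}) r :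
  B (\sum_(i < m) F i) r = \sum_(i < m) B (F i) r.
Proof. elim: m F => [|m IH] F; first by rewrite !big_ord0 Bl0.
by rewrite !big_ord_recr /= BlD IH. Qed.
Lemma Bsumr m (F : 'I_m -> {poly C}) r :
  B r (\sum_(i < m) F i) = \sum_(i < m) B r (F i).
Proof. elim: m F => [|m IH] F; first by rewrite !big_ord0 Br0.
by rewrite !big_ord_recr /= BrD IH. Qed.
End Aux.

Lemma size_sub_lead (q p : {poly C}) n :
  (size q <= n.+1)%N -> size p = n.+1 -> p \is monic -> (size (q - q`_n *: p)%R <= n)%N.
Proof.
move=> Hq Hp Hm; apply/leq_sizeP => j Hj; rewrite coefB coefZ.
rewrite leq_eqVlt in Hj; case/orP: Hj => [/eqP <-|Hj].
  have : lead_coef p = 1 by apply/monicP.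
  by rewrite lead_coefE Hp /= => ->; rewrite mulr1 subrr.
have Hp' : (size p <= n.+1)%N by rewrite Hp.
move/leq_sizeP: Hq => Hq; move/leq_sizeP: Hp' => Hp'.
by rewrite (Hq j Hj) (Hp' j Hj) mulr0 subr0.
Qed.

Lemma size_sub_monic (q p : {poly C}) n :
  size q = n.+1 -> size p = n.+1 -> q \is monic -> p \is monic -> (size (q - p)%R <= n)%N.
Proof.
move=> Hq Hp Hmq Hmp.
have -> : p = q`_n *: p.
  have : lead_coef q = 1 by apply/monicP.
  by rewrite lead_coefE Hq /= => ->; rewrite scale1r.
by apply: size_sub_lead => //; rewrite Hq.
Qed.

Lemma span_ind (p : nat -> {poly C})
  (Hp : forall k, size (p k) = k.+1 /\ p k \is monic) (P : {poly C} -> Prop) n :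
  P 0 -> (forall k a q, (k < n)%N -> P q -> P (a *: p k + q)) ->
  forall q : {poly C}, (size q <= n)%N -> P q.
Proof.
move=> P0; elim: n => [|n IH] Hs q.
  by rewrite leqn0 size_poly_eq0 => /eqP ->.
move=> Hq; have -> : q = q`_n *: p n + (q - q`_n *: p n) by rewrite addrC subrK.
apply: (Hs) => //; apply: IH => //.
  by move=> k a r Hk; apply: (Hs); apply: leqW.
by apply: size_sub_lead => //; [exact: (Hp n).1 | exact: (Hp n).2].
Qed.

Section MB.
Variable B : {poly C} -> {poly C} -> C.
Hypothesis hB : bilinear_form B.
Variables phi psi : nat -> {poly C}.
Hypothesis hM : monic_biorthogonal B phi psi.

Lemma mb_off m n : m != n -> B (phi m) (psi n) = 0.
Proof. move=> H; case: hM => _ [h [_ Hh]]; by rewrite Hh (negbTE H) mulr0. Qed.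

Lemma mb_h n : B (phi n) (psi n) != 0.
Proof. case: hM => _ [h [Hn Hh]]; by rewrite Hh eqxx mulr1. Qed.

Lemma left_orth n (q : {poly C}) : (size q <= n)%N -> B (phi n) q = 0.
Proof.
have Hp : forall k, size (psi k) = k.+1 /\ psi k \is monic.
  by move=> k; case: (hM.1 k) => ? [? [? ?]].
move: q; apply: (@span_ind psi Hp (fun q => B (phi n) q = 0) n).
- exact: Br0.
- move=> k a r Hk Hr; rewrite (hB.2 a) Hr addr0 mb_off ?mulr0 //.
  by rewrite neq_ltn Hk orbT.
Qed.

Lemma right_orth n (q : {poly C}) : (size q <= n)%N -> B q (psi n) = 0.
Proof.
have Hp : forall k, size (phi k) = k.+1 /\ phi k \is monic.
  by move=> k; case: (hM.1 k) => ? [? [? ?]].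
move: q; apply: (@span_ind phi Hp (fun q => B q (psi n) = 0) n).
- exact: Bl0.
- move=> k a r Hk Hr; rewrite (hB.1 a) Hr addr0 mb_off ?mulr0 //.
  by rewrite neq_ltn Hk.
Qed.

Lemma mb_uniq n (x : {poly C}) : (size x <= n)%N ->
  (forall k, (k < n)%N -> B x (psi k) = 0) -> x = 0.
Proof.
elim: n x => [|n IH] x Hx Ho.
  by move: Hx; rewrite leqn0 size_poly_eq0 => /eqP.
have Hy : x - x`_n *: phi n = 0.
  apply: IH.
    by apply: size_sub_lead => //; case: (hM.1 n) => ? [? [? ?]].
  move=> k Hk; rewrite BlB // BlZ // Ho ?mb_off ?mulr0 ?subr0 //.
    by rewrite neq_ltn Hk orbT.
  exact: leqW.
have Ex : x = x`_n *: phi n by apply/eqP; rewrite -subr_eq0 Hy.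
have := Ho n (ltnSn n); rewrite {1}Ex BlZ // => /eqP; rewrite mulf_eq0.
rewrite (negbTE (mb_h n)) orbF => /eqP H0.
by rewrite Ex H0 scale0r.
Qed.

Lemma mb_decomp n (x : {poly C}) : (size x <= n.+1)%N ->
  (forall k, (k < n)%N -> B x (psi k) = 0) -> x = x`_n *: phi n.
Proof.
move=> Hx Ho; apply/eqP; rewrite -subr_eq0; apply/eqP; apply: (@mb_uniq n).
  by apply: size_sub_lead => //; case: (hM.1 n) => ? [? [? ?]].
move=> k Hk; rewrite BlB // BlZ // Ho // mb_off ?mulr0 ?subr0 //.
by rewrite neq_ltn Hk orbT.
Qed.

End MB.

Lemma bil_swap B : bilinear_form B -> bilinear_form (fun p q => B q p).
Proof. by case=> h1 h2; split=> a p q r /=; [rewrite h2 | rewrite h1]. Qed.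

Lemma bil_star B (s : C) : bilinear_form B ->
  bilinear_form (fun p q => B (('X - s%:P) * p) q).
Proof.
case=> h1 h2; split=> a p q r /=; last by rewrite h2.
by rewrite mulrDr -scalerAr h1.
Qed.

Lemma bil_dag B (s : C) : bilinear_form B ->
  bilinear_form (fun p q => B p (('X - s%:P) * q)).
Proof.
case=> h1 h2; split=> a p q r /=; first by rewrite h1.
by rewrite mulrDr -scalerAr h2.
Qed.

Lemma mb_swap B phi psi : monic_biorthogonal B phi psi ->
  monic_biorthogonal (fun p q => B q p) psi phi.
Proof.
case=> Hs [h [Hh Hb]]; split.
  by move=> n; case: (Hs n) => ? [? [? ?]].
exists h; split => // m n /=; rewrite Hb.
by case: (eqVneq m n) => [->//|H]; rewrite !mulr0.
Qed.

Lemma tau_swap B n : tau (fun p q => B q p) n = tau B n.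
Proof. rewrite /tau -det_tr; congr (\det _); apply/matrixP => i j; by rewrite !mxE. Qed.

Lemma size_XsubCmul (s : C) (p : {poly C}) n :
  size p = n.+1 -> p \is monic ->
  size (('X - s%:P) * p) = n.+2 /\ ('X - s%:P) * p \is monic.
Proof.
move=> Hs Hm; split; last by rewrite monicMl ?monicXsubC.
rewrite size_monicM ?monicXsubC ?size_XsubC ?Hs //.
by rewrite -size_poly_eq0 Hs.
Qed.

Lemma claim1 B (s : C) phi psi phis psis :
  bilinear_form B -> monic_biorthogonal B phi psi ->
  monic_biorthogonal (fun p q => B (('X - s%:P) * p) q) phis psis ->
  (forall n, (phi n).[s] != 0) ->
  forall n, ('X - s%:P) * phis n =
            phi n.+1 + (- ((phi n.+1).[s] / (phi n).[s])) *: phi n.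
Proof.
move=> hB hM hMs hs n.
have hBs := bil_star s hB.
set x := ('X - s%:P) * phis n - phi n.+1.
have [Sx Mx] : size (('X - s%:P) * phis n) = n.+2 /\ ('X - s%:P) * phis n \is monic.
  by case: (hMs.1 n) => ? [? [? ?]]; apply: size_XsubCmul.
have Hx : x = x`_n *: phi n.
  apply: (mb_decomp hB hM).
    by apply: size_sub_monic => //; case: (hM.1 n.+1) => ? [? [? ?]].
  move=> k Hk; rewrite /x BlB //.
  rewrite (left_orth hBs hMs); last by case: (hM.1 k) => _ [-> _].
  by rewrite (mb_off hM) ?subrr // neq_ltn ltnS (ltnW Hk) orbT.
have Ex : x.[s] = - (phi n.+1).[s].
  by rewrite /x hornerD hornerN hornerM hornerXsubC subrr mul0r add0r.
have Ec : x`_n = - ((phi n.+1).[s] / (phi n).[s]).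
  apply: (mulIf (hs n)); rewrite mulNr divfK // -Ex {2}Hx hornerZ //.
by rewrite -Ec -Hx /x (addrC (phi n.+1)) subrK.
Qed.

Lemma claim2 B (s : C) phi psi phid psid (qd : nat -> C) :
  bilinear_form B -> monic_biorthogonal B phi psi ->
  monic_biorthogonal (fun p q => B p (('X - s%:P) * q)) phid psid ->
  (forall n, ('X - s%:P) * psid n = psi n.+1 + qd n *: psi n) ->
  forall n, phi n.+1 =
    phid n.+1 + (B (phi n.+1) (psi n.+1) / (qd n * B (phi n) (psi n))) *: phid n.
Proof.
move=> hB hM hMd hC n.
have hBd := bil_dag s hB.
set x := phi n.+1 - phid n.+1.
have Hx : x = x`_n *: phid n.
  apply: (mb_decomp hBd hMd).
    apply: size_sub_monic.
    - by case: (hM.1 n.+1) => -> _.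
    - by case: (hMd.1 n.+1) => -> _.
    - by case: (hM.1 n.+1) => _ [_ [-> _]].
    - by case: (hMd.1 n.+1) => _ [_ [-> _]].
  move=> k Hk; rewrite /x /= BlB //.
  rewrite (left_orth hB hM); last first.
    case: (hMd.1 k) => _ [Sk [_ Mk]].
    by rewrite (@size_XsubCmul s (psid k) k Sk Mk).1.
  have H0 : B (phid n.+1) (('X - s%:P) * psid k) = 0.
    by apply: (mb_off hMd); rewrite neq_ltn ltnS (ltnW Hk) orbT.
  by rewrite H0 subrr.
set hd := B (phid n) (('X - s%:P) * psid n).
have hd0 : hd != 0 := mb_h hMd n.
have E1 : B x (('X - s%:P) * psid n) = B (phi n.+1) (psi n.+1).
  rewrite /x BlB //.
  have H0 : B (phid n.+1) (('X - s%:P) * psid n) = 0.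
    by apply: (mb_off hMd); rewrite neq_ltn ltnSn orbT.
  rewrite H0 subr0 hC BrD // BrZ // (mb_off hM n.+1 n) ?mulr0 ?addr0 //.
  by rewrite neq_ltn ltnSn orbT.
have E2 : hd = qd n * B (phi n) (psi n).
  rewrite /hd hC BrD // BrZ // (right_orth hB hM n.+1); last first.
    by case: (hMd.1 n) => -> _.
  rewrite add0r; congr (_ * _).
  have -> : phid n = (phid n - phi n) + phi n by rewrite subrK.
  rewrite BlD // (right_orth hB hM n) ?add0r //.
  apply: size_sub_monic.
  - by case: (hMd.1 n) => -> _.
  - by case: (hM.1 n) => -> _.
  - by case: (hMd.1 n) => _ [_ [-> _]].
  - by case: (hM.1 n) => _ [_ [-> _]].
have Ec : x`_n = B (phi n.+1) (psi n.+1) / (qd n * B (phi n) (psi n)).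
  rewrite -E2 -E1 {2}Hx (BlZ hB) -/hd mulfK //.
by rewrite -Ec -Hx /x (addrC (phid n.+1)) subrK.
Qed.

Lemma poly_expand (p : {poly C}) m : (size p <= m)%N ->
  p = \sum_(i < m) p`_i *: 'X^i.
Proof.
move=> Hp; rewrite -poly_def; apply/polyP => k; rewrite coef_poly.
move/leq_sizeP: Hp => Hp.
by case: ltnP => // Hk; rewrite Hp.
Qed.

Lemma B_expand B (p q : {poly C}) m : bilinear_form B ->
  (size p <= m)%N -> (size q <= m)%N ->
  B p q = \sum_(l < m) (\sum_(k < m) p`_k * B 'X^k 'X^l) * q`_l.
Proof.
move=> hB Hp Hq.
rewrite {1}(@poly_expand q m Hq) (Bsumr hB); apply: eq_bigr => l _.
rewrite (BrZ hB) {1}(@poly_expand p m Hp) (Bsuml hB) mulrC; congr (_ * _).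
by apply: eq_bigr => k _; rewrite (BlZ hB).
Qed.

Lemma unitri_det m (f : nat -> {poly C}) :
  (forall k, size (f k) = k.+1 /\ f k \is monic) ->
  \det (\matrix_(i < m, j < m) (f i)`_j) = 1.
Proof.
move=> Hf; rewrite det_trig.
  apply: big1 => i _; rewrite mxE.
  case: (Hf i) => Si /monicP; by rewrite lead_coefE Si.
apply/is_trig_mxP => i j Hij; rewrite mxE.
case: (Hf i) => Si _.
have : (size (f i) <= j)%N by rewrite Si.
by move/leq_sizeP => ->.
Qed.

Lemma tau_prod B phi psi : bilinear_form B -> monic_biorthogonal B phi psi ->
  forall m, tau B m = \prod_(k < m) B (phi k) (psi k).
Proof.
move=> hB hM m.
set G := \matrix_(i < m, j < m) B 'X^i 'X^j.
set L := \matrix_(i < m, j < m) (phi i)`_j.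
set U := \matrix_(i < m, j < m) (psi i)`_j.
have HM : L *m G *m U^T = \matrix_(i < m, j < m) B (phi i) (psi j).
  apply/matrixP => i j; rewrite mxE [RHS]mxE (@B_expand B (phi i) (psi j) m hB).
  - apply: eq_bigr => l _; rewrite !mxE; congr (_ * _).
    by apply: eq_bigr => k _; rewrite !mxE.
  - by case: (hM.1 i) => -> _.
  - by case: (hM.1 j) => _ [-> _].
have dL : \det L = 1 by apply: unitri_det => k; case: (hM.1 k) => ? [? [? ?]].
have dU : \det U = 1 by apply: unitri_det => k; case: (hM.1 k) => ? [? [? ?]].
have := congr1 determinant HM; rewrite !det_mulmx det_tr dL dU mul1r mulr1.
rewrite /tau -/G => ->; rewrite det_trig.
  by apply: eq_bigr => i _; rewrite mxE.
apply/is_trig_mxP => i j Hij; rewrite mxE (mb_off hM) //.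
by rewrite neq_ltn Hij.
Qed.

Unset Implicit Arguments.

Theorem theorem2 (B : {poly C} -> {poly C} -> C) (sstar sdag : C)
  (phi psi phis psis phid psid : nat -> {poly C}) :
  bilinear_form B ->
  (forall n : nat, tau B n != 0) ->
  monic_biorthogonal B phi psi ->
  monic_biorthogonal (fun p q => B (('X - sstar%:P) * p) q) phis psis ->
  monic_biorthogonal (fun p q => B p (('X - sdag%:P) * q)) phid psid ->
  (forall n : nat, (phi n).[sstar] != 0) ->
  (forall n : nat, (psi n).[sdag] != 0) ->
  let qs := fun n : nat => - ((phi n.+1).[sstar] / (phi n).[sstar]) in
  let qd := fun n : nat => - ((psi n.+1).[sdag] / (psi n).[sdag]) in
  let es := fun n : nat =>
    tau B n * tau B n.+2 / (qs n * tau B n.+1 ^+ 2) in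
  let ed := fun n : nat =>
    tau B n * tau B n.+2 / (qd n * tau B n.+1 ^+ 2) in
  forall n : nat,
    ('X - sstar%:P) * phis n = phi n.+1 + qs n *: phi n /\
    phi n.+1 = phid n.+1 + ed n *: phid n /\
    ('X - sdag%:P) * psid n = psi n.+1 + qd n *: psi n /\
    psi n.+1 = psis n.+1 + es n *: psis n.
Proof.
move=> hB htau hM hMs hMd hs hd qs qd es ed.
have C1 : forall n, ('X - sstar%:P) * phis n = phi n.+1 + qs n *: phi n.
  exact: (claim1 sstar hB hM hMs hs).
have C3 : forall n, ('X - sdag%:P) * psid n = psi n.+1 + qd n *: psi n.
  exact: (claim1 sdag (bil_swap hB) (mb_swap hM) (mb_swap hMd) hd).
have C2 := claim2 sdag qd hB hM hMd C3.
have C4 := claim2 sstar qs (bil_swap hB) (mb_swap hM) (mb_swap hMs) C1.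
have hh := mb_h hM.
have T := tau_prod hB hM.
have key : forall (q : C) n, B (phi n.+1) (psi n.+1) / (q * B (phi n) (psi n)) =
   tau B n * tau B n.+2 / (q * tau B n.+1 ^+ 2).
  move=> q n; rewrite !T !big_ord_recr /= -!T.
  have t0 := htau n; have h0 := hh n; have h1 := hh n.+1.
  case: (eqVneq q 0) => [->|q0]; first by rewrite !mul0r !invr0 !mulr0.
  by field; rewrite ?q0 ?t0 ?h0.
move=> n; split; first exact: C1.
split; first by rewrite /ed -key; exact: C2.
split; first exact: C3.
by rewrite /es -key; exact: C4.
Qed.
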